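(* Let $S=(n,\phi,F)$ be a semicoherent system whose lifetime distribution has no ties. Then for every $j\in[n]$, $$I_{\mathrm{BP}}^{(j)}=\sum_{A\subseteq[n]\setminus\{j\}}r_j(A)\,m_\phi(A\cup\{j\}).$$
   Context: Semicoherent system $S=(n,\phi,F)$: $\phi:2^{[n]}\to\{0,1\}$ nondecreasing (subsets identified with Boolean vectors), $\phi(\varnothing)=0$, $\phi([n])=1$; $F$ is the joint c.d.f. of nonnegative component lifetimes $X_1,\ldots,X_n$ with $\Pr(X_i=X_k)=0$ for $i\neq k$. System lifetime $T=\inf\{t\geq0:\phi(\{i:X_i>t\})=0\}$, and $I_{\mathrm{BP}}^{(j)}=\Pr(T=X_j)$. The Möbius transform of $\phi$ is $m_\phi(A)=\sum_{B\subseteq A}(-1)^{|A|-|B|}\phi(B)$. For $j\in[n]$ and $A\subseteq[n]\setminus\{j\}$, $r_j(A)=\Pr\big(X_j<\min_{i\in A}X_i\big)$ (empty min $=+\infty$). *)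

(* Defs.v *)
From HB Require Import structures.
From mathcomp Require Import all_boot all_order all_algebra.
Set Implicit Arguments. Unset Strict Implicit. Unset Printing Implicit Defensive.
Import Order.TTheory GRing.Theory Num.Theory.
Local Open Scope ring_scope.

(* A (finitely additive) probability space: an algebra of measurable events
   (predicates on Omega) and a probability on it. *)
Record prob_space (R : realFieldType) (Omega : Type) := ProbSpace {
  measurable : (Omega -> Prop) -> Prop;
  prob : (Omega -> Prop) -> R;
  measurableT : measurable (fun _ => True);
  measurableC : forall E, measurable E -> measurable (fun w => ~ E w);
  measurableU : forall E F, measurable E -> measurable F ->
                  measurable (fun w => E w \/ F w);
  measurable_ext : forall E F, (forall w, E w <-> F w) ->
                  measurable E -> measurable F;
  prob_ext : forall E F, (forall w, E w <-> F w) -> prob E = prob F;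
  prob_ge0 : forall E, measurable E -> 0 <= prob E;
  probT : prob (fun _ => True) = 1;
  prob_add : forall E F, measurable E -> measurable F ->
               (forall w, E w -> F w -> False) ->
               prob (fun w => E w \/ F w) = prob E + prob F
}.

Definition is_inf (R : realFieldType) (S : R -> Prop) (x : R) : Prop :=
  (forall t, S t -> x <= t) /\
  (forall y, (forall t, S t -> y <= t) -> y <= x).

Definition semicoherent (n : nat) (phi : {set 'I_n} -> bool) : Prop :=
  (forall A B : {set 'I_n}, A \subset B -> phi A -> phi B) /\
  phi set0 = false /\ phi setT = true.

Definition system_lifetime_is (R : realFieldType) (n : nat) (Omega : Type)
  (phi : {set 'I_n} -> bool) (X : Omega -> 'I_n -> R) (w : Omega) (x : R) : Prop :=
  is_inf (fun t => 0 <= t /\ phi [set i | t < X w i] = false) x.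

Definition mobius (R : realFieldType) (n : nat) (phi : {set 'I_n} -> bool)
  (A : {set 'I_n}) : R :=
  \sum_(B : {set 'I_n} | B \subset A) (-1) ^+ (#|A| - #|B|) * (phi B)%:R.

(* r_j(A) = Pr(X_j < min_{i in A} X_i) (empty min = +infinity) *)
Definition r_prob (R : realFieldType) (n : nat) (Omega : Type)
  (PS : prob_space R Omega) (X : Omega -> 'I_n -> R) (j : 'I_n)
  (A : {set 'I_n}) : R :=
  prob PS (fun w => forall i, i \in A -> X w j < X w i).

(* Barlow-Proschan importance of component j: Pr(T = X_j) *)
Definition I_BP (R : realFieldType) (n : nat) (Omega : Type)
  (PS : prob_space R Omega) (phi : {set 'I_n} -> bool)
  (X : Omega -> 'I_n -> R) (j : 'I_n) : R :=
  prob PS (fun w => system_lifetime_is phi X w (X w j)).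

(* Main.v *)
Require Import Defs.
From HB Require Import structures.
From mathcomp Require Import all_boot all_order all_algebra.
From Stdlib Require Import Classical.
Import Order.TTheory GRing.Theory Num.Theory.
Local Open Scope ring_scope.

Section Comb.
Variables (T : finType) (R : comNzRingType).

Definition mobf (g : {set T} -> R) (A : {set T}) : R :=
  \sum_(B : {set T} | B \subset A) (-1) ^+ (#|A| - #|B|) * g B.

Lemma subU1_notin (x : T) (A D : {set T}) : x \notin D ->
  (D \subset x |: A) = (D \subset A).
Proof.
move=> xD; apply/idP/idP => s; last exact: subset_trans s (subsetUr _ _).
apply/subsetP => y yD; have := subsetP s y yD; rewrite in_setU1.
case/orP => // /eqP ey; by rewrite -ey yD in xD.
Qed.

Lemma sum_splitU1 (x : T) (A : {set T}) (F : {set T} -> R) : x \notin A ->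
  \sum_(D : {set T} | D \subset x |: A) F D =
  \sum_(D : {set T} | D \subset A) F D + \sum_(D : {set T} | D \subset A) F (x |: D).
Proof.
move=> xA.
have nsub : forall D : {set T}, x \in D -> (D \subset A) = false.
  move=> D xD; apply/negP => s; have := subsetP s x xD; by rewrite (negbTE xA).
rewrite (bigID (fun D : {set T} => x \in D)) /= addrC; congr (_ + _).
  apply: eq_bigl => D; case xD: (x \in D) => /=; first by rewrite andbF nsub.
  by rewrite andbT subU1_notin ?xD.
rewrite (reindex_onto (fun D : {set T} => x |: D) (fun D : {set T} => D :\ x)); last first.
  by move=> D /andP[_ xD]; rewrite setD1K.
apply: eq_bigl => D; case xD: (x \in D).
  rewrite nsub //; apply/negbTE; rewrite negb_and; apply/orP; right.
  apply/negP => /eqP e; move: xD; by rewrite -e setD11.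
rewrite setU1K ?xD // eqxx andbT setU11 andbT.
rewrite subUset sub1set setU11 /= subU1_notin ?xD //.
Qed.

Lemma mobfU1 (x : T) (A : {set T}) g : x \notin A ->
  mobf g (x |: A) = mobf (fun D => g (x |: D) - g D) A.
Proof.
move=> xA; rewrite /mobf sum_splitU1 // -big_split /=; apply: eq_bigr => D sDA.
have xD : x \notin D by apply/negP => xD; have := subsetP sDA x xD; rewrite (negbTE xA).
rewrite !cardsU1 xA xD !add1n subSS subSn ?subset_leq_card // exprS.
by rewrite mulrBr mulN1r mulNr addrC.
Qed.

Lemma mob_inv : forall (B : {set T}) (g : {set T} -> R),
  \sum_(A : {set T} | A \subset B) mobf g A = g B.
Proof.
move=> B; move: {2}#|B| (erefl #|B|) => k; elim: k B => [|k IH] B cB g.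
  have -> : B = set0 by apply/eqP; rewrite -cards_eq0 cB.
  rewrite (big_pred1 set0); last by move=> A; rewrite /= subset0.
  rewrite /mobf (big_pred1 set0); last by move=> A; rewrite /= subset0.
  by rewrite cards0 subnn expr0 mul1r.
have [x xB] : exists x, x \in B by apply/set0Pn; rewrite -cards_eq0 cB.
have nx : x \notin B :\ x by rewrite setD11.
have cB' : #|B :\ x| = k.
  by have := cardsD1 x B; rewrite xB cB add1n => -[].
rewrite -{1 2}(setD1K xB) sum_splitU1 // IH //.
rewrite (eq_bigr (fun A => mobf (fun D => g (x |: D) - g D) A)); last first.
  move=> A sA; apply: mobfU1; apply/negP => xA; have := subsetP sA x xA.
  by rewrite (negbTE nx).
by rewrite IH // addrC subrK.
Qed.

End Comb.

Section Pointwise.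
Variables (R : realFieldType) (n : nat) (phi : {set 'I_n} -> bool) (x : 'I_n -> R).
Hypothesis Hphi : semicoherent phi.
Hypothesis Hnn : forall i, 0 <= x i.
Hypothesis Hnt : forall i k : 'I_n, i != k -> x i != x k.

Lemma le_set_eq j : [set i | x j <= x i] = j |: [set i | x j < x i].
Proof.
apply/setP => i; rewrite !inE le_eqVlt; case: (eqVneq i j) => [->|ne].
  by rewrite !eqxx.
by rewrite eq_sym (negbTE (Hnt i j ne)).
Qed.

Lemma life_char j :
  is_inf (fun t => 0 <= t /\ phi [set i | t < x i] = false) (x j) <->
  (phi [set i | x j < x i] = false /\ phi (j |: [set i | x j < x i]) = true).
Proof.
case: Hphi => [mono [ph0 phT]].
split.
- case=> lb glb.
  have A1 : phi [set i | x j < x i] = false.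
    apply/negP => pA.
    have [i0 i0A] : exists i0, i0 \in [set i | x j < x i].
      apply/set0Pn; apply/negP => /eqP e; by rewrite e ph0 in pA.
    case: (arg_minP x i0A) => im imA immin.
    have : x im <= x j.
      apply: glb => t [t0 pt]; rewrite leNgt; apply/negP => ltm.
      suff : phi [set i | t < x i] by rewrite pt.
      apply: mono pA; apply/subsetP => i iA; rewrite inE.
      exact: lt_le_trans ltm (immin i iA).
    move=> h; have imA2 : im \in [set i | x j < x i] := imA; rewrite inE in imA2. by move: h; rewrite leNgt imA2.
  split => //; case pB: (phi (j |: [set i | x j < x i])) => //; rewrite -le_set_eq in pB.
  have [t0 [t00 [t0lt t0max]]] : exists t0, 0 <= t0 /\ t0 < x j /\
       forall i, x i < x j -> x i <= t0.
    case: (pickP (fun i => x i < x j)) => [i0 i0lt|none].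
      case: (arg_maxP x (i0lt : (fun i => x i < x j) i0)) => im imlt immax.
      by exists (x im); split; [exact: Hnn | split].
    exists 0; split => //; split; last by move=> i; rewrite none.
    rewrite lt_def Hnn andbT; apply/negP => /eqP xj0.
    suff : phi [set i | x j <= x i] by rewrite pB.
    rewrite (_ : [set i | x j <= x i] = setT) ?phT //.
    by apply/setP => i; rewrite !inE xj0 Hnn.
  have : x j <= t0.
    apply: lb; split => //; rewrite -pB; congr phi; apply/setP => i; rewrite !inE.
    case: (ltP (x i) (x j)) => h.
      by apply/negbTE; rewrite -leNgt; apply: t0max.
    by rewrite (lt_le_trans t0lt h).
  by rewrite leNgt t0lt.
- case=> pA pB; split.
  + move=> t [t0 pt]; rewrite leNgt; apply/negP => tlt.
    suff : phi [set i | t < x i] by rewrite pt.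
    apply: mono pB; rewrite -le_set_eq; apply/subsetP => i; rewrite !inE.
    exact: lt_le_trans.
  + move=> y; apply; split => //.
Qed.
End Pointwise.

Section Prob.
Variables (R : realFieldType) (Omega : Type) (PS : prob_space R Omega).
Local Notation M := (measurable PS).
Local Notation P := (prob PS).

Lemma measF : M (fun _ => False).
Proof. apply: measurable_ext (measurableC (measurableT PS)) => w; tauto. Qed.

Lemma measI E F : M E -> M F -> M (fun w => E w /\ F w).
Proof.
move=> HE HF.
apply: measurable_ext (measurableC (measurableU (measurableC HE) (measurableC HF))) => w.
split; last tauto.
by move=> H; split; apply: NNPP => ?; apply: H; tauto.
Qed.

Lemma prob0 : P (fun _ => False) = 0.
Proof.
have := prob_add measF measF (fun _ (h : False) _ => h).
rewrite (prob_ext PS (F := fun _ => False)); last by move=> w; tauto.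
move=> h; have : P (fun _ => False) + P (fun _ => False) - P (fun _ => False) = 0.
  by rewrite -h subrr.
by rewrite addrK.
Qed.

Lemma prob_False E : (forall w, ~ E w) -> P E = 0.
Proof. by move=> h; rewrite -prob0; apply: prob_ext => w; split => //; apply: h. Qed.

Lemma prob_le E F : M E -> M F -> (forall w, E w -> F w) -> P E <= P F.
Proof.
move=> HE HF sub.
have HG : M (fun w => F w /\ ~ E w) by apply: measI => //; exact: measurableC.
rewrite (prob_ext PS (E := F) (F := fun w => E w \/ (F w /\ ~ E w))); last first.
  move=> w; split; first by move=> h; case: (classic (E w)); tauto.
  by case=> [/sub|[]].
rewrite prob_add //; last by move=> w ? [].
by rewrite lerDl; apply: prob_ge0.
Qed.

Lemma prob_or_le E F : M E -> M F -> P (fun w => E w \/ F w) <= P E + P F.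
Proof.
move=> HE HF.
have HG : M (fun w => F w /\ ~ E w) by apply: measI => //; exact: measurableC.
rewrite (prob_ext PS (F := fun w => E w \/ (F w /\ ~ E w))); last first.
  move=> w; split; first by case: (classic (E w)); tauto.
  tauto.
rewrite prob_add //; last by move=> w ? [].
by rewrite lerD2l; apply: prob_le => // w [] //.
Qed.

Lemma prob_null_eq N E F : M N -> P N = 0 -> M E -> M F ->
  (forall w, ~ N w -> (E w <-> F w)) -> P E = P F.
Proof.
move=> HN PN HE HF eqEF.
have split_ev : forall G, M G -> P G = P (fun w => G w /\ ~ N w).
  move=> G HG.
  have HGN : M (fun w => G w /\ N w) by apply: measI.
  have HGnN : M (fun w => G w /\ ~ N w) by apply: measI => //; exact: measurableC.
  rewrite (prob_ext PS (E := G) (F := fun w => (G w /\ N w) \/ (G w /\ ~ N w))); last first.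
    by move=> w; split; [case: (classic (N w)); tauto | tauto].
  rewrite prob_add //; last by move=> w [] ? ? [].
  suff -> : P (fun w => G w /\ N w) = 0 by rewrite add0r.
  apply/le_anti; rewrite prob_ge0 // andbT -PN; apply: prob_le => // w [] //.
rewrite (split_ev E HE) (split_ev F HF); apply: prob_ext => w.
split=> -[h nN]; split=> //; by apply (eqEF w nN).
Qed.

Lemma meas_ex (I : eqType) (r : seq I) (E : I -> Omega -> Prop) :
  (forall i, i \in r -> M (E i)) -> M (fun w => exists2 i, i \in r & E i w).
Proof.
elim: r => [|a r IH] H.
  by apply: measurable_ext measF => w; split => //; case.
have Hr : forall i, i \in r -> M (E i) by move=> i hi; apply: H; rewrite in_cons hi orbT.
apply: measurable_ext (measurableU (H a (mem_head _ _)) (IH Hr)) => w.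
split.
  case=> [h|[i hi h]]; first by exists a => //; exact: mem_head.
  by exists i => //; rewrite in_cons hi orbT.
case=> i; rewrite in_cons; case/orP=> [/eqP->|hi] h; [by left | right; by exists i].
Qed.

Lemma meas_all (I : eqType) (r : seq I) (E : I -> Omega -> Prop) :
  (forall i, i \in r -> M (E i)) -> M (fun w => forall i, i \in r -> E i w).
Proof.
elim: r => [|a r IH] H.
  by apply: measurable_ext (measurableT PS) => w; split.
have Hr : forall i, i \in r -> M (E i) by move=> i hi; apply: H; rewrite in_cons hi orbT.
apply: measurable_ext (measI _ _ (H a (mem_head _ _)) (IH Hr)) => w.
split.
  move=> [ha hr] i; rewrite in_cons; case/orP => [/eqP->|hi] //; exact: hr.
move=> h; split; first by apply: h; exact: mem_head.
by move=> i hi; apply: h; rewrite in_cons hi orbT.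
Qed.

Lemma prob_ex_sum (I : eqType) (r : seq I) (E : I -> Omega -> Prop) :
  uniq r -> (forall i, i \in r -> M (E i)) ->
  (forall i k w, i != k -> E i w -> E k w -> False) ->
  P (fun w => exists2 i, i \in r & E i w) = \sum_(i <- r) P (E i).
Proof.
elim: r => [|a r IH] ur H disj.
  by rewrite big_nil; apply: prob_False => w [].
have Hr : forall i, i \in r -> M (E i) by move=> i hi; apply: H; rewrite in_cons hi orbT.
move: ur => /= /andP[ar ur].
rewrite big_cons -IH //.
rewrite -prob_add //; first last.
- move=> w ha [i hi hE]; apply: (disj a i w) => //.
  by apply/negP => /eqP e; rewrite e hi in ar.
- exact: meas_ex.
- exact: H (mem_head _ _).
apply: prob_ext => w; split.
  case=> i; rewrite in_cons; case/orP=> [/eqP->|hi] h; [by left | right; by exists i].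
case=> [h|[i hi h]]; first by exists a => //; exact: mem_head.
by exists i => //; rewrite in_cons hi orbT.
Qed.

Lemma prob_ex_null (I : eqType) (r : seq I) (E : I -> Omega -> Prop) :
  (forall i, i \in r -> M (E i) /\ P (E i) = 0) ->
  P (fun w => exists2 i, i \in r & E i w) = 0.
Proof.
elim: r => [|a r IH] H.
  by apply: prob_False => w [].
have Hr : forall i, i \in r -> M (E i) /\ P (E i) = 0.
  by move=> i hi; apply: H; rewrite in_cons hi orbT.
have [Ma Pa] := H a (mem_head _ _).
have Mr : M (fun w => exists2 i, i \in r & E i w).
  by apply: meas_ex => i hi; case: (Hr i hi).
rewrite (prob_ext PS (F := fun w => E a w \/ exists2 i, i \in r & E i w)); last first.
  move=> w; split.
    case=> i; rewrite in_cons; case/orP=> [/eqP->|hi] h; [by left | right; by exists i].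
  case=> [h|[i hi h]]; first by exists a => //; exact: mem_head.
  by exists i => //; rewrite in_cons hi orbT.
apply/le_anti; apply/andP; split; last by apply: prob_ge0; exact: measurableU.
by rewrite -(addr0 0) -{1}Pa -(IH Hr); apply: prob_or_le.
Qed.

End Prob.

Theorem corollary6 (R : realFieldType) (n : nat) (Omega : Type)
  (PS : prob_space R Omega) (phi : {set 'I_n} -> bool)
  (X : Omega -> 'I_n -> R)
  (Hphi : semicoherent phi)
  (Hnonneg : forall w i, 0 <= X w i)
  (Hmeas_lt : forall i k, measurable PS (fun w => X w i < X w k))
  (Hmeas_T : forall j, measurable PS (fun w => system_lifetime_is phi X w (X w j)))
  (Hnoties : forall i k : 'I_n, i != k -> prob PS (fun w => X w i = X w k) = 0)
  (j : 'I_n) :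
  I_BP PS phi X j =
  \sum_(A : {set 'I_n} | j \notin A) r_prob PS X j A * @mobius R n phi (j |: A).
Proof.
pose N := fun w => exists i k : 'I_n, i != k /\ X w i = X w k.
have measEq : forall i k, measurable PS (fun w => X w i = X w k).
  move=> i k.
  apply: measurable_ext (measurableC (measurableU (Hmeas_lt i k) (Hmeas_lt k i))) => w.
  split => [h|->]; last by rewrite ltxx => -[].
  case: (ltgtP (X w i) (X w k)) => c //; exfalso; apply: h; tauto.
have [PN MN] : prob PS N = 0 /\ measurable PS N.
  pose Ep := fun (p : 'I_n * 'I_n) w => p.1 != p.2 /\ X w p.1 = X w p.2.
  have mE : forall p, measurable PS (Ep p).
    move=> [i k]; rewrite /Ep /=; case: (eqVneq i k) => [->|ne].
      apply: measurable_ext (@measF _ _ PS) => w; split => //; case=> h _.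
      by move: h => /eqP.
    by apply: measurable_ext (measEq i k) => w; split => //; case.
  have pE : forall p, prob PS (Ep p) = 0.
    move=> [i k]; rewrite /Ep /=; case: (eqVneq i k) => [->|ne].
      by apply: prob_False => w [/eqP h _].
    rewrite -(Hnoties i k ne); apply: prob_ext => w; split; [by case | by split].
  have eN : forall w, N w <-> exists2 p, p \in index_enum _ & Ep p w.
    move=> w; split.
      case=> i [k [ne e]]; exists (i, k) => //; exact: mem_index_enum.
    case=> [[i k]] _ [ne e]; by exists i, k.
  split.
    rewrite (prob_ext PS eN); apply: prob_ex_null => p _; split; [exact: mE|exact: pE].
  apply: measurable_ext (@meas_ex _ _ PS _ _ _ (fun p _ => mE p)) => w; exact: iff_sym (eN w).
have mD : forall B, measurable PS (fun w => [set i | X w j < X w i] = B).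
  move=> B.
  pose Ei := fun i w => if i \in B then is_true (X w j < X w i) else ~ (X w j < X w i).
  have : measurable PS (fun w => forall i, i \in index_enum 'I_n -> Ei i w).
    apply: meas_all => i _; rewrite /Ei; case: (i \in B); first exact: Hmeas_lt.
    exact/measurableC/Hmeas_lt.
  apply: measurable_ext => w; split.
    move=> h; apply/setP => i; rewrite inE; have := h i (mem_index_enum _); rewrite /Ei.
    case: (i \in B); first by move=> ->.
    by move/negP/negbTE.
  move=> e i _; rewrite /Ei -e inE; by case: (X w j < X w i).
have mR : forall A : {set 'I_n}, measurable PS (fun w => forall i, i \in A -> X w j < X w i).
  move=> A.
  pose Ei := fun i w => if i \in A then is_true (X w j < X w i) else True.
  have : measurable PS (fun w => forall i, i \in index_enum 'I_n -> Ei i w).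
    apply: meas_all => i _; rewrite /Ei; case: (i \in A); first exact: Hmeas_lt.
    exact: measurableT.
  apply: measurable_ext => w; split.
    move=> h i iA; have := h i (mem_index_enum _); by rewrite /Ei iA.
  move=> h i _; rewrite /Ei; case iA: (i \in A) => //; exact: h.
have part : forall E, measurable PS E ->
   prob PS E = \sum_(B : {set 'I_n}) prob PS (fun w => E w /\ [set i | X w j < X w i] = B).
  move=> E ME.
  rewrite -(@prob_ex_sum _ _ PS _ (index_enum {set 'I_n})
              (fun B w => E w /\ [set i | X w j < X w i] = B)).
  - apply: prob_ext => w; split; last by case=> B _ [].
    by move=> h; exists [set i | X w j < X w i] => //; exact: mem_index_enum.
  - exact: index_enum_uniq.
  - by move=> B _; apply: measI.
  - by move=> B1 B2 w ne [_ e1] [_ e2]; rewrite -e1 -e2 eqxx in ne.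
pose p := fun B => prob PS (fun w => [set i | X w j < X w i] = B).
pose c := fun B : {set 'I_n} => (phi (j |: B))%:R - (phi B)%:R : R.
have eRD : forall A B : {set 'I_n}, prob PS (fun w => (forall i, i \in A -> X w j < X w i)
     /\ [set i | X w j < X w i] = B) = (A \subset B)%:R * p B.
  move=> A B; case: (boolP (A \subset B)) => sAB.
    rewrite mul1r; apply: prob_ext => w; split; first by case.
    move=> e; split => // i iA; have := subsetP sAB i iA; by rewrite -e inE.
  rewrite mul0r; apply: prob_False => w [h e]; apply: (negP sAB).
  apply/subsetP => i iA; rewrite -e inE; exact: h.
have comb : forall B : {set 'I_n}, j \notin B ->
    \sum_(A : {set 'I_n} | A \subset B) @mobius R n phi (j |: A) = c B.
  move=> B jB.
  rewrite (eq_bigr (fun A : {set 'I_n} => @mobf _ R (fun D => (phi (j |: D))%:R - (phi D)%:R) A)).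
    exact: mob_inv.
  move=> A sA; apply: (@mobfU1 _ R j A (fun D => (phi D)%:R)).
  by apply/negP => jA; rewrite (subsetP sA j jA) in jB.
have RHS : \sum_(A : {set 'I_n} | j \notin A) r_prob PS X j A * @mobius R n phi (j |: A)
    = \sum_(B : {set 'I_n}) p B * c B.
  rewrite (eq_bigr (fun A : {set 'I_n} => \sum_(B : {set 'I_n}) (A \subset B)%:R * p B * @mobius R n phi (j |: A)));
    last first.
    move=> A _; rewrite /r_prob (part _ (mR A)) mulr_suml; apply: eq_bigr => B _.
    by rewrite eRD.
  rewrite exchange_big /=; apply: eq_bigr => B _.
  case: (boolP (j \in B)) => jB.
    have -> : p B = 0 by apply: prob_False => w e; move: jB; rewrite -e inE ltxx.
    by rewrite mul0r big1 // => A _; rewrite mulr0 mul0r.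
  rewrite -(comb B jB) mulr_sumr big_mkcond [RHS]big_mkcond /=; apply: eq_bigr => A _.
  case: (boolP (A \subset B)) => sAB.
    have jA : j \notin A by apply/negP => jA; rewrite (subsetP sAB j jA) in jB.
    by rewrite jA mul1r.
  by case: (j \notin A); rewrite ?mul0r.
rewrite RHS /I_BP (part _ (Hmeas_T j)); apply: eq_bigr => B _.
have lc : forall w, ~ N w -> (system_lifetime_is phi X w (X w j) <->
    (phi [set i | X w j < X w i] = false /\ phi (j |: [set i | X w j < X w i]) = true)).
  move=> w nN; apply: life_char => //.
  move=> i k ne; apply/eqP => e; apply: nN; by exists i, k.
case: Hphi => [mono [ph0 phT]].
have mED : measurable PS (fun w => system_lifetime_is phi X w (X w j) /\
                                   [set i | X w j < X w i] = B).
  by apply: measI; [exact: Hmeas_T | exact: mD].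
case: (boolP (~~ phi B && phi (j |: B))) => hB.
  move/andP: hB => [/negbTE pB pjB]; rewrite /c pB pjB subr0 mulr1.
  apply: (@prob_null_eq _ _ PS _ _ _ MN PN) => //.
  move=> w nN; split; first by case.
  move=> e; split => //; apply/(lc w nN); rewrite e; split => //.
have -> : c B = 0.
  rewrite /c; case pB: (phi B).
    by rewrite (mono _ _ (subsetUr _ _) pB) subrr.
  by move: hB; rewrite pB /= => /negbTE ->; rewrite subrr.
rewrite mulr0 -(@prob0 _ _ PS); apply: (@prob_null_eq _ _ PS _ _ _ MN PN) => //; first exact: measF.
move=> w nN; split => // -[hE e]; move/(lc w nN): hE; rewrite e => -[h1 h2].
by move: hB; rewrite h1 h2.
Qed.
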